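(* Let $G$ be a finite group, $\mathcal H$ a finite-dimensional Hilbert space, $\rho$ a state on $\mathcal H$, $\epsilon\ge0$, and let $f:G\to\mathscr U(\mathcal H)$ be an $(\epsilon,\rho)$-homomorphism. Suppose $S\le G$ is a subgroup such that $f(sg)=f(s)f(g)$ for all $s\in S$, $g\in G$. Then $f|_S$ is a representation of $S$, and there exist a finite-dimensional Hilbert space $\mathcal K$, an isometry $V:\mathcal H\to\mathcal K$ and a representation $\phi:G\to\mathscr U(\mathcal K)$ such that $$\|Vf(g)-\phi(g)V\|_\rho^2\le\epsilon\quad\text{for all } g\in G,$$ and every irreducible component $\xi$ of $\phi$ satisfies $\widehat{f|_S}(\xi|_S)\neq0$.
   Context: $\mathscr U(\mathcal H)$ is the unitary group of $\mathcal H$. For a state $\rho$ on $\mathcal H$ and a linear map $T$ from $\mathcal H$ to some Hilbert space, $\|T\|_\rho=\sqrt{\mathrm{Tr}(T^*T\rho)}$. A function $f:G\to\mathscr U(\mathcal H)$ is an $(\epsilon,\rho)$-homomorphism if for every $g\in G$, $\frac1{|G|}\sum_{h\in G}\|f(h)f(g)-f(hg)\|_\rho^2\le\epsilon$. For a finite group $S$, a function $u:S\to\mathscr U(\mathcal H)$, and a unitary representation $\xi:S\to\mathscr U(\mathbb C^d)$, the Fourier transform is $\hat u(\xi)=\frac1{|S|}\sum_{s\in S}u(s)\otimes\overline{\xi(s)}$ on $\mathcal H\otimes\mathbb C^d$, where $\overline{\xi(s)}$ is the entrywise complex conjugate in the standard basis. An irreducible component of a representation $\phi$ of $G$ is an irreducible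 representation appearing in a decomposition of $\phi$ (up to unitary equivalence) as a direct sum of irreducibles. *)

(* Defs.v *)
From HB Require Import structures.
From mathcomp Require Import all_boot all_order all_algebra all_fingroup all_field all_character.
Set Implicit Arguments. Unset Strict Implicit. Unset Printing Implicit Defensive.
Import Order.TTheory GRing.Theory Num.Theory Num.Def.
Local Open Scope ring_scope.
Local Open Scope sesquilinear_scope.

(* Conventions: a finite-dimensional Hilbert space is C^n (C = algC), operators
   are matrices acting on COLUMN vectors, A^t* is the conjugate transpose. *)

Definition adjmx (m n : nat) (A : 'M[algC]_(m, n)) : 'M[algC]_(n, m) := A ^t*.

Definition is_state (n : nat) (rho : 'M[algC]_n) : Prop :=
  [/\ adjmx rho = rho,
      (forall v : 'cV[algC]_n, 0 <= (adjmx v *m rho *m v) 0 0)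
    & \tr rho = 1].

Definition rho_norm2 (m n : nat) (rho : 'M[algC]_n) (T : 'M[algC]_(m, n)) : algC :=
  \tr (adjmx T *m T *m rho).

Definition is_isometry (k n : nat) (V : 'M[algC]_(k, n)) : Prop :=
  adjmx V *m V = 1%:M.

Definition unitary (n : nat) (U : 'M[algC]_n) : Prop :=
  U \is unitarymx /\ adjmx U *m U = 1%:M.

Definition unitary_rep (gT : finGroupType) (G : {set gT}) (n : nat)
  (r : gT -> 'M[algC]_n) : Prop :=
  (forall g, g \in G -> unitary (r g)) /\
  (forall g h, g \in G -> h \in G -> r (g * h)%g = r g *m r h).

(* irreducible unitary representation: nonzero space, and no invariant subspace
   (column space of U) other than 0 and the whole space *)
Definition irreducible_rep (gT : finGroupType) (G : {set gT}) (d : nat)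
  (xi : gT -> 'M[algC]_d) : Prop :=
  [/\ unitary_rep G xi, (0 < d)%N &
      forall U : 'M[algC]_d,
        (forall g, g \in G -> exists Y : 'M[algC]_d, xi g *m U = U *m Y) ->
        U = 0 \/ \rank U = d].

Definition eps_rho_hom (gT : finGroupType) (n : nat) (eps : algC)
  (rho : 'M[algC]_n) (f : gT -> 'M[algC]_n) : Prop :=
  forall g : gT,
    #|[set: gT]|%:R^-1 * (\sum_(h : gT) rho_norm2 rho (f h *m f g - f (h * g)%g))
      <= eps.

(* xi (on C^d) is an irreducible component of phi (on C^k): phi is unitarily
   equivalent to a direct sum of irreducibles xs i, realised by isometries W i
   with pairwise orthogonal ranges summing to the whole space and intertwining
   phi with xs i, and xi is unitarily equivalent to one of the xs i. *)
Definition is_component (gT : finGroupType) (G : {set gT}) (k : nat)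
  (phi : gT -> 'M[algC]_k) (d : nat) (xi : gT -> 'M[algC]_d) : Prop :=
  exists (m : nat) (dd : 'I_m -> nat)
         (xs : forall i : 'I_m, gT -> 'M[algC]_(dd i))
         (W : forall i : 'I_m, 'M[algC]_(k, dd i)),
    [/\ (forall i, irreducible_rep G (xs i)) /\ (forall i, is_isometry (W i)),
        forall i j, i != j -> adjmx (W i) *m W j = 0,
        \sum_(i < m) W i *m adjmx (W i) = 1%:M,
        forall i g, g \in G -> phi g *m W i = W i *m xs i g &
        exists i : 'I_m, exists U : 'M[algC]_(dd i, d),
          [/\ is_isometry U, U *m adjmx U = 1%:M &
              forall g, g \in G -> xs i g *m U = U *m xi g]].

Definition fourier (gT : finGroupType) (S : {set gT}) (n d : nat)
  (u : gT -> 'M[algC]_n) (xi : gT -> 'M[algC]_d) : 'M[algC]_(n * d) :=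
  #|S|%:R^-1 *: \sum_(s in S) tprod (u s) (map_mx conjC (xi s)).

(* Main.v *)
Require Import Defs.
From HB Require Import structures.
From mathcomp Require Import all_boot all_order all_algebra all_fingroup all_field all_character.
Set Implicit Arguments. Unset Strict Implicit. Unset Printing Implicit Defensive.
Import Order.TTheory GRing.Theory Num.Theory.
Local Open Scope ring_scope.
Local Open Scope sesquilinear_scope.

Lemma sum_ev (T : finType) (F : T -> algC) :
  \sum_(i < #|T|) F (enum_val i) = \sum_t F t.
Proof. by rewrite (big_enum_val F). Qed.

Lemma ev_eq (T : finType) (l : 'I_#|T|) (p : T) : (enum_val l == p) = (l == enum_rank p).
Proof. by rewrite -(can_eq enum_valK) enum_rankK. Qed.

Notation KK n gT := #|{: ('I_n * gT)%type}|.

Definition phi0 (gT : finGroupType) (n : nat) (g : gT) : 'M[algC]_(KK n gT) :=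
  \matrix_(i, j) (enum_val j == ((enum_val i).1, ((enum_val i).2 * g)%g))%:R.

Lemma phi0_mul (gT : finGroupType) (n m : nat) (g : gT) (M : 'M[algC]_(KK n gT, m)) i j :
  (phi0 n g *m M) i j = M (enum_rank ((enum_val i).1, ((enum_val i).2 * g)%g)) j.
Proof.
rewrite !mxE (bigD1 (enum_rank ((enum_val i).1, ((enum_val i).2 * g)%g))) //=.
rewrite mxE enum_rankK eqxx mul1r big1 ?addr0 // => l /negbTE ne.
by rewrite mxE ev_eq ne mul0r.
Qed.

Lemma adjM (m p q : nat) (A : 'M[algC]_(m, p)) (B : 'M[algC]_(p, q)) :
  (A *m B)^t* = B^t* *m A^t*.
Proof.
apply/matrixP => i j; rewrite !mxE rmorph_sum; apply: eq_bigr => k _.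
by rewrite !mxE rmorphM mulrC.
Qed.

Lemma phi0M (gT : finGroupType) (n : nat) (g h : gT) :
  phi0 n g *m phi0 n h = phi0 n (g * h)%g.
Proof.
apply/matrixP => i j; rewrite phi0_mul !mxE enum_rankK /= mulgA //.
Qed.

Lemma phi01 (gT : finGroupType) (n : nat) : phi0 n (1%g : gT) = 1%:M.
Proof.
apply/matrixP => i j; rewrite !mxE mulg1 -surjective_pairing.
by rewrite -(can_eq enum_rankK) !enum_valK eq_sym.
Qed.

Lemma phi0_adj (gT : finGroupType) (n : nat) (g : gT) :
  (phi0 n g)^t* = phi0 n (g^-1)%g.
Proof.
apply/matrixP => i j; rewrite !mxE conjC_nat.
apply/congr1/congr1.
case: (enum_val i) => a x; case: (enum_val j) => b y /=.
rewrite !xpair_eqE; apply/andP/andP => -[/eqP -> /eqP ->]; split => //.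
  by rewrite mulgK.
by rewrite mulgKV.
Qed.

Definition Lm (gT : finGroupType) (n : nat) : 'M[algC]_(n, KK n gT) :=
  \matrix_(a, j) (enum_val j == (a, 1%g))%:R.

Lemma Lm_mul (gT : finGroupType) (n m : nat) (M : 'M[algC]_(KK n gT, m)) a j :
  (Lm gT n *m M) a j = M (enum_rank (a, 1%g)) j.
Proof.
rewrite !mxE (bigD1 (enum_rank (a, 1%g))) //=.
rewrite mxE enum_rankK eqxx mul1r big1 ?addr0 // => l /negbTE ne.
by rewrite mxE ev_eq ne mul0r.
Qed.

Definition Jm (gT : finGroupType) (n : nat) : 'M[algC]_(KK n gT, n) :=
  \matrix_(j, b) (enum_val j == (b, 1%g))%:R.

Lemma Jm_mul (gT : finGroupType) (n m : nat) (M : 'M[algC]_(m, KK n gT)) i b :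
  (M *m Jm gT n) i b = M i (enum_rank (b, 1%g)).
Proof.
rewrite !mxE (bigD1 (enum_rank (b, 1%g))) //=.
rewrite mxE enum_rankK eqxx mulr1 big1 ?addr0 // => l /negbTE ne.
by rewrite mxE ev_eq ne mulr0.
Qed.

Definition Pm (gT : finGroupType) (n : nat) (h : gT) : 'M[algC]_(KK n gT) :=
  \matrix_(j', j) (enum_val j' == ((enum_val j).1, (h * (enum_val j).2)%g))%:R.

Lemma Pm_mul (gT : finGroupType) (n m : nat) h (M : 'M[algC]_(m, KK n gT)) i j :
  (M *m Pm n h) i j = M i (enum_rank ((enum_val j).1, (h * (enum_val j).2)%g)).
Proof.
rewrite !mxE (bigD1 (enum_rank ((enum_val j).1, (h * (enum_val j).2)%g))) //=.
rewrite mxE enum_rankK eqxx mulr1 big1 ?addr0 // => l /negbTE ne.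
by rewrite mxE ev_eq ne mulr0.
Qed.

Definition V0 (gT : finGroupType) (n : nat) (c : algC) (f : gT -> 'M[algC]_n) :
  'M[algC]_(KK n gT, n) :=
  \matrix_(i, b) (c * f (enum_val i).2 (enum_val i).1 b).

Definition Am (gT : finGroupType) (n : nat) (c : algC) (f : gT -> 'M[algC]_n) :
  'M[algC]_(KK n gT) :=
  \matrix_(i, j) (c * f ((enum_val i).2 * (enum_val j).2)%g (enum_val i).1 (enum_val j).1).

Lemma V0_A (gT : finGroupType) n c (f : gT -> 'M[algC]_n) : V0 c f = Am c f *m Jm gT n.
Proof. by apply/matrixP => i b; rewrite Jm_mul !mxE enum_rankK /= mulg1. Qed.

Lemma phi0_A (gT : finGroupType) n c (f : gT -> 'M[algC]_n) (h : gT) : phi0 n h *m Am c f = Am c f *m Pm n h.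
Proof. by apply/matrixP => i j; rewrite Pm_mul phi0_mul !mxE !enum_rankK /= mulgA. Qed.

Lemma L_phi0_A (gT : finGroupType) n c (f : gT -> 'M[algC]_n) (S : {group gT}) s :
  (forall s g, s \in S -> f (s * g)%g = f s *m f g) -> s \in S ->
  Lm gT n *m (phi0 n s *m Am c f) = f s *m (Lm gT n *m Am c f).
Proof.
move=> hf sS; apply/matrixP => a j; rewrite Lm_mul phi0_mul !mxE !enum_rankK /=.
rewrite mul1g hf // mxE mulr_sumr; apply: eq_bigr => l _.
by rewrite Lm_mul !mxE enum_rankK /= mul1g mulrCA.
Qed.

Lemma L_phi0_inj (gT : finGroupType) n m (M : 'M[algC]_(KK n gT, m)) :
  (forall g, Lm gT n *m (phi0 n g *m M) = 0) -> M = 0.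
Proof.
move=> h; apply/matrixP => i j.
move/matrixP: (h (enum_val i).2) => /(_ (enum_val i).1 j).
rewrite Lm_mul phi0_mul enum_rankK /= mul1g -surjective_pairing enum_valK.
by rewrite !mxE.
Qed.

Lemma stack_adj (gT : finGroupType) n c (D : gT -> 'M[algC]_n)
  (M : 'M[algC]_(KK n gT, n)) :
  (forall i b, M i b = c * D (enum_val i).2 (enum_val i).1 b) ->
  M^t* *m M = (c^* * c) *: \sum_x (D x)^t* *m D x.
Proof.
move=> hM; apply/matrixP => b b'.
rewrite !mxE summxE mulr_sumr.
pose F := fun t : 'I_n * gT => (c * D t.2 t.1 b)^* * (c * D t.2 t.1 b').
transitivity (\sum_(i < KK n gT) F (enum_val i)).
  by apply: eq_bigr => i _; rewrite !mxE !hM.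
rewrite (sum_ev F) -(pair_bigA _ (fun a x => F (a, x))) exchange_big /F /=; apply: eq_bigr => x _.
rewrite !mxE mulr_sumr; apply: eq_bigr => a _; rewrite !mxE rmorphM mulrACA.
by [].
Qed.

Lemma trace_delta (m p : nat) (A : 'M[algC]_(m, p)) (k : 'I_p) (i : 'I_m) :
  \tr (A *m delta_mx k i) = A i k.
Proof.
rewrite /mxtrace (bigD1 i) //= big1 ?addr0.
  rewrite mxE (bigD1 k) //= mxE !eqxx mulr1 big1 ?addr0 // => u /negbTE nu.
  by rewrite mxE nu mulr0.
move=> t /negbTE nt; rewrite mxE big1 // => u _.
by rewrite mxE nt andbF mulr0.
Qed.

Lemma schmidt_facts (K : nat) (A : 'M[algC]_K) :
  let E := schmidt (row_base (A^t*)) in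
  [/\ E *m E^t* = 1%:M, exists Y, A = E^t* *m Y & exists X, E^t* = A *m X].
Proof.
move=> E; split.
- by apply/unitarymxP; apply: schmidt_unitarymx; exact: rank_leq_col.
- have : (A^t* <= E)%MS.
    by apply: (submx_trans _ (schmidt_sub _)); rewrite eq_row_base.
  by case/submxP => Y hY; exists (Y^t*); move: (congr1 (fun M => M^t*) hY); rewrite trmxCK adjM.
- have : (E <= A^t*)%MS by rewrite /E eqmx_schmidt_free ?row_base_free // eq_row_base.
  by case/submxP => X hX; exists (X^t*); rewrite hX adjM trmxCK.
Qed.

Lemma comp_fourier (gT : finGroupType) n d (f : gT -> 'M[algC]_n) (S : {group gT})
  (M : 'M[algC]_(n, d)) (xi : gT -> 'M[algC]_d) :
  (forall s, s \in S -> M *m xi s = f s *m M) ->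
  (forall s, s \in S -> xi s *m (xi s)^t* = 1%:M) -> M != 0 ->
  fourier S f xi != 0.
Proof.
move=> hM hxi; apply: contra => /eqP hF.
have S0 : #|S|%:R != 0 :> algC by rewrite pnatr_eq0 -lt0n cardG_gt0.
have key k l i j : \sum_(s in S) f s i k * (xi s j l)^* = 0.
  have := congr1 (fun X => \tr (X *m tprod (delta_mx k i) (delta_mx l j))) hF.
  rewrite /= mul0mx mxtrace0 /fourier -scalemxAl mxtraceZ mulmx_suml.
  rewrite raddf_sum /=.
  under eq_bigr => s _ do rewrite -tprodE mxtrace_prod !trace_delta mxE.
  by move/eqP; rewrite mulf_eq0 invr_eq0 (negbTE S0) /= => /eqP.
apply/eqP/matrixP => i j; rewrite mxE.
have -> : M i j = #|S|%:R^-1 * \sum_(s in S) (f s *m M *m (xi s)^t*) i j.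
  under eq_bigr => s sS do rewrite -hM // -mulmxA hxi // mulmx1.
  by rewrite sumr_const -(mulr_natl (M i j)) mulrA mulVf // mul1r.
apply/eqP; rewrite mulf_eq0; apply/orP; right; apply/eqP.
under eq_bigr => s _ do rewrite mxE.
under eq_bigr => s _ do under eq_bigr => l _ do rewrite !mxE mulr_suml.
rewrite exchange_big /= big1 // => l _; rewrite exchange_big /= big1 // => k _.
under eq_bigr => s _ do rewrite -mulrA (mulrC (M k l)) mulrA.
by rewrite -mulr_suml key mul0r.
Qed.

Theorem theorem4p1 (gT : finGroupType) (n : nat) (rho : 'M[algC]_n)
  (eps : algC) (f : gT -> 'M[algC]_n) (S : {group gT}) :
  is_state rho -> 0 <= eps ->
  (forall g, unitary (f g)) ->
  eps_rho_hom eps rho f ->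
  (forall s g, s \in S -> f (s * g)%g = f s *m f g) ->
  unitary_rep S f /\
  exists (k : nat) (V : 'M[algC]_(k, n)) (phi : gT -> 'M[algC]_k),
    [/\ is_isometry V, unitary_rep [set: gT] phi,
        forall g, rho_norm2 rho (V *m f g - phi g *m V) <= eps &
        forall (d : nat) (xi : gT -> 'M[algC]_d),
          is_component [set: gT] phi xi -> fourier S f xi != 0].
Proof.
move=> hrho heps hfu hhom hS.
split; first by split => [g _ | g h gS _]; [exact: hfu | exact: hS].
pose N := #|[set: gT]|.
have N0 : N%:R != 0 :> algC by rewrite pnatr_eq0 -lt0n /N; apply/card_gt0P; exists 1%g; rewrite inE.
pose c := sqrtC (N%:R^-1 : algC).
have hc : c^* * c = N%:R^-1.
  by rewrite /c geC0_conj ?sqrtC_ge0 ?invr_ge0 ?ler0n // -expr2 sqrtCK.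
pose A := Am c f.
pose E := schmidt (row_base (A^t*)).
have [EE [Y hY] [X hX]] := schmidt_facts A.
pose Pr := E^t* *m E.
have PA : Pr *m A = A by rewrite hY /Pr -!mulmxA (mulmxA E) EE mul1mx.
have Pphi g : Pr *m (phi0 n g *m E^t*) = phi0 n g *m E^t*.
  by rewrite hX !mulmxA -(mulmxA Pr) phi0_A mulmxA PA.
have PV : Pr *m V0 c f = V0 c f by rewrite V0_A mulmxA PA.
have PphiV g : Pr *m (phi0 n g *m V0 c f) = phi0 n g *m V0 c f.
  by rewrite V0_A !mulmxA -(mulmxA Pr) phi0_A mulmxA PA.
exists (\rank (A^t*)), (E *m V0 c f), (fun g => E *m phi0 n g *m E^t*).
split.
- rewrite /is_isometry /adjmx adjM mulmxA -(mulmxA _ (E^t*)) -/Pr.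
  rewrite -mulmxA PV (@stack_adj _ _ c f); last by move=> i b; rewrite mxE.
  under eq_bigr => x _ do rewrite (proj2 (hfu x)).
  by rewrite hc sumr_const /N cardsT -scaler_nat scalerA mulVf -?cardsT // scale1r.
- split => [g _ | g h _ _].
    have MM : (E *m phi0 n g *m E^t*)^t* *m (E *m phi0 n g *m E^t*) = 1%:M.
      rewrite !adjM trmxCK phi0_adj -!mulmxA (mulmxA (E^t*) E) -/Pr Pphi.
      by rewrite (mulmxA (phi0 n g^-1)) phi0M mulVg phi01 mul1mx EE.
    by split => //; apply/unitarymxP; exact: mulmx1C MM.
  by rewrite -phi0M -!mulmxA (mulmxA (E^t*) E) -/Pr Pphi.
- move=> g; pose Yd := V0 c f *m f g - phi0 n g *m V0 c f.
  have -> : E *m V0 c f *m f g - E *m phi0 n g *m E^t* *m (E *m V0 c f) = E *m Yd.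
    by rewrite /Yd mulmxBr -!mulmxA (mulmxA (E^t*) E) -/Pr PV.
  have PY : Pr *m Yd = Yd by rewrite mulmxBr mulmxA PV PphiV.
  have hYd i b : Yd i b = c * (f (enum_val i).2 *m f g - f ((enum_val i).2 * g)%g)
                               (enum_val i).1 b.
    have e1 : (phi0 n g *m V0 c f) i b = c * f ((enum_val i).2 * g)%g (enum_val i).1 b.
      by rewrite phi0_mul mxE enum_rankK.
    rewrite /Yd mxE [X in _ + X]mxE e1 [X in _ = _ * X]mxE [X in _ = _ * (_ + X)]mxE.
    rewrite mulrDr mulrN; congr (_ - _).
    rewrite !mxE mulr_sumr.
    by apply: eq_bigr => l _; rewrite !mxE mulrA.
  rewrite /rho_norm2 /adjmx adjM -(mulmxA (Yd^t*)) (mulmxA (E^t*)) -/Pr PY.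
  rewrite (@stack_adj _ _ c (fun x => f x *m f g - f (x * g)%g) Yd hYd) hc.
  rewrite -scalemxAl mxtraceZ mulmx_suml raddf_sum.
  exact: hhom g.
- move=> d xi [m [dd [xs [W [[irr iso] orth sumW inter [i [U [isoU UU hU]]]]]]]].
  pose Wt := W i *m U.
  have Wint g : (E *m phi0 n g *m E^t*) *m Wt = Wt *m xi g.
    by rewrite /Wt mulmxA (inter i g (in_setT g)) -mulmxA -hU ?inE // mulmxA.
  have Wt0 : Wt != 0.
    apply/negP => /eqP W0.
    have U0 : U = 0 by rewrite -[U]mul1mx -(iso i) -mulmxA -/Wt W0 mulmx0.
    have [_ dpos _] := irr i.
    move/matrixP: UU => /(_ (Ordinal dpos) (Ordinal dpos)).
    by rewrite U0 mul0mx !mxE eqxx /= => /eqP; rewrite eq_sym oner_eq0.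
  have xiU s : xi s *m (xi s)^t* = 1%:M.
    have exi : xi s = U^t* *m xs i s *m U.
      by rewrite -mulmxA hU ?inE // mulmxA isoU mul1mx.
    have [[/(_ s (in_setT s)) [/unitarymxP xsU _] _] _ _] := irr i.
    rewrite exi !adjM trmxCK -!mulmxA (mulmxA U) UU mul1mx (mulmxA (xs i s)) xsU.
    by rewrite mul1mx isoU.
  pose Z := E^t* *m Wt.
  have Zint g : phi0 n g *m Z = Z *m xi g.
    by rewrite /Z -mulmxA -(Wint g) !mulmxA -Pphi /Pr !mulmxA.
  have ZA : Z = A *m (X *m Wt) by rewrite /Z hX mulmxA.
  apply: (@comp_fourier _ _ _ f S (Lm gT n *m Z)).
  + move=> s sS; rewrite -mulmxA -Zint ZA !mulmxA -(mulmxA _ _ A).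
    by rewrite (L_phi0_A _ hS sS) !mulmxA.
  + by move=> s _; exact: xiU.
  + apply: contra Wt0 => /eqP M0.
    have Z0 : Z = 0.
      by apply: L_phi0_inj => g; rewrite Zint mulmxA M0 mul0mx.
    by rewrite -[Wt]mul1mx -EE -mulmxA -/Z Z0 mulmx0.
Qed.
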